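(* Under the model and the disjoint threshold-based policy with threshold $P_S>0$ described in the context, the long-run transmission probability of $S$, $$\Psi_S=\lim_{n\to\infty}\frac1n\sum_{t=1}^n \mathbf{E}\big[\mathbf{1}_{B_S^t\ge P_S}\big],$$ exists and equals $$\Psi_S=\min\Big(1,\frac{\lambda_S}{P_S}\Big).$$
   Context: Time is slotted, $t=1,2,\dots$ (one slot = unit time, so energy and power are identified). The transmitter $S$ harvests energy $E_S^t\ge 0$ at the end of slot $t$; $\{E_S^t\}_t$ is a stationary and ergodic sequence with mean $\mathbf{E}[E_S^t]=\lambda_S>0$. The battery has infinite capacity; $B_S^t$ is the battery energy at the beginning of slot $t$, with $B_S^1=0$, and $B_S^{t+1}=B_S^t-P_S^t+E_S^t$, where $P_S^t$ is the energy consumed in slot $t$. Disjoint threshold-based policy with threshold $P_S>0$: $P_S^t=P_S$ if $B_S^t\ge P_S$ (then $S$ transmits), and $P_S^t=0$ otherwise. *)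

(* Defs.v *)
From HB Require Import structures.
From mathcomp Require Import all_boot all_order all_algebra.
From mathcomp Require Import all_classical all_reals all_analysis.
Set Implicit Arguments. Unset Strict Implicit. Unset Printing Implicit Defensive.
Import Order.TTheory GRing.Theory Num.Theory.
Local Open Scope classical_set_scope.
Local Open Scope ring_scope.

Definition consumption {R : realType} (Ps b : R) : R :=
  if Ps <= b then Ps else 0.

(* Battery level at the beginning of slot t (0-based: slot t here is slot t+1
   of the paper), given the harvested energies E 0, E 1, ... :
   B 0 = 0,  B (t+1) = B t - consumption Ps (B t) + E t. *)
Fixpoint battery {R : realType} (E : nat -> R) (Ps : R) (t : nat) : R :=
  match t with
  | 0 => 0
  | t'.+1 => battery E Ps t' - consumption Ps (battery E Ps t') + E t'
  end.

Definition measure_preserving {d} {T : measurableType d} {R : realType}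
  (P : probability T R) (theta : T -> T) : Prop :=
  measurable_fun setT theta /\
  forall A : set T, measurable A -> P (theta @^-1` A) = P A.

Definition ergodic {d} {T : measurableType d} {R : realType}
  (P : probability T R) (theta : T -> T) : Prop :=
  forall A : set T, measurable A -> theta @^-1` A = A ->
    P A = 0%E \/ P A = 1%E.

(* Main.v *)
Require Import Defs.
From HB Require Import structures.
From mathcomp Require Import all_boot all_order all_algebra.
From mathcomp Require Import all_classical all_reals all_analysis.
From mathcomp Require Import measurable_realfun.
From mathcomp Require Import ring lra.
Import Order.TTheory GRing.Theory Num.Theory numFieldNormedType.Exports.
Local Open Scope classical_set_scope.
Local Open Scope ring_scope.

Section Batt.
Context {R : realType}.

Definition Ncnt (e : nat -> R) (Ps : R) (n : nat) : R :=
  \sum_(t < n) ((Ps <= battery e Ps t)%R)%:R.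

Lemma NcntS e Ps n : Ncnt e Ps n.+1 = Ncnt e Ps n + ((Ps <= battery e Ps n)%R)%:R.
Proof. by rewrite /Ncnt big_ord_recr. Qed.

Lemma batt_eq (e : nat -> R) Ps n :
  battery e Ps n = \sum_(t < n) e t - Ps * Ncnt e Ps n.
Proof.
elim: n => [|n IH]; first by rewrite /Ncnt !big_ord0 mulr0 subr0.
rewrite /= NcntS big_ord_recr /= IH /consumption -IH.
case: ifP => _ /=; lra.
Qed.

Lemma batt_ge0 (e : nat -> R) Ps n : (forall t, 0 <= e t) -> 0 <= battery e Ps n.
Proof.
move=> e0; elim: n => [|n IH] //=; rewrite /consumption.
case: (leP Ps (battery e Ps n)) => H; have := e0 n; lra.
Qed.

Lemma Ncnt_le (e : nat -> R) Ps n : Ncnt e Ps n <= n%:R.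
Proof.
rewrite /Ncnt; apply: (@le_trans _ _ (\sum_(t < n) (1 : R))).
  by apply: ler_sum => t _; rewrite -[1 : R]/(1%:R) ler_nat leq_b1.
by rewrite sumr_const card_ord.
Qed.

Lemma Ncnt_ge0 (e : nat -> R) Ps n : 0 <= Ncnt e Ps n.
Proof. by apply: sumr_ge0 => t _; exact: ler0n. Qed.

Lemma batt_idle (e : nat -> R) Ps n U : 0 <= Ps ->
  (forall k, (k <= n)%N -> k%:R * Ps - \sum_(t < k) e t <= U) ->
  Ps * (n%:R - Ncnt e Ps n) <= 2 * Ps + U.
Proof.
move=> Ps0; elim: n => [|n IH] H.
  have := H 0%N (leqnn _); rewrite /Ncnt !big_ord0 /=; lra.
have IH' := IH (fun k kn => H k (leqW kn)).
rewrite NcntS; case: (boolP (Ps <= battery e Ps n)) => Hb /=.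
  by rewrite -natr1; move: IH'; lra.
have Hn := H n (leqW (leqnn n)).
move: Hb; rewrite -ltNge batt_eq -natr1 => Hb.
move: Hn Hb; lra.
Qed.

End Batt.

Section Erg.
Context d (T : measurableType d) (R : realType) (P : probability T R) (theta : T -> T).
Hypothesis mtheta : measurable_fun setT theta.
Hypothesis pres : forall A, measurable A -> P (theta @^-1` A) = P A.

Lemma int_comp (h : T -> \bar R) : measurable_fun setT h -> (forall x, (0 <= h x)%E) ->
  (\int[P]_x h (theta x) = \int[P]_x h x)%E.
Proof.
move=> mh h0.
have := @ge0_integral_pushforward _ _ T T R theta mtheta P setT h measurableT mh (fun y _ => h0 y).
rewrite preimage_setT => <-.
apply: eq_measure_integral => A mA _ /=.
by rewrite /pushforward pres.
Qed.

Lemma mset_le (h : T -> R) c : measurable_fun setT h -> measurable [set x | h x <= c].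
Proof.
move=> mh; have := mh measurableT `]-oo, c]%classic (measurable_itv _); rewrite setTI.
congr measurable; apply/seteqP; split => x /=; by rewrite in_itv.
Qed.

Lemma mset_gt (h : T -> R) c : measurable_fun setT h -> measurable [set x | c < h x].
Proof.
move=> mh; have := mh measurableT `]c, +oo[%classic (measurable_itv _); rewrite setTI.
congr measurable; apply/seteqP; split => x /=; by rewrite in_itv /= andbT.
Qed.

Lemma miter k : measurable_fun setT (iter k theta).
Proof.
elim: k => [|k IH] /=; first exact: measurable_id.
exact: measurableT_comp.
Qed.

Definition S (g : T -> R) (k : nat) (w : T) : R := \sum_(j < k) g (iter j theta w).

Lemma S0 g w : S g 0 w = 0.
Proof. by rewrite /S big_ord0. Qed.

Lemma SS g k w : S g k.+1 w = g w + S g k (theta w).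
Proof.
rewrite /S big_ord_recl /=; congr (_ + _); apply: eq_bigr => j _.
by rewrite /bump /= add0n -iterSr iterS.
Qed.

Lemma mS g k : measurable_fun setT g -> measurable_fun setT (S g k).
Proof.
move=> mg; rewrite /S; apply: measurable_sum => j.
exact: measurableT_comp (miter j).
Qed.

Lemma int_iter (h : T -> \bar R) k : measurable_fun setT h -> (forall x, (0 <= h x)%E) ->
  (\int[P]_x h (iter k theta x) = \int[P]_x h x)%E.
Proof.
move=> mh h0; elim: k => [|k IH] //=.
rewrite -IH -(int_comp (fun x => h (iter k theta x))) //.
  by apply: eq_integral => x _; rewrite -iterSr.
exact: measurableT_comp (miter k).
Qed.


Fixpoint mx (g : T -> R) (n : nat) (w : T) : R :=
  if n is n'.+1 then Num.max (mx g n' w) (S g n w) else 0.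

Lemma mx_ge0 g n w : 0 <= mx g n w.
Proof. by elim: n => [|n IH] //=; rewrite le_max IH. Qed.

Lemma mx_ge g n k w : (k <= n)%N -> S g k w <= mx g n w.
Proof.
elim: n => [|n IH] /=.
  by rewrite leqn0 => /eqP ->; rewrite S0.
rewrite leq_eqVlt => /orP [/eqP ->|]; first by rewrite le_max lexx orbT.
by rewrite ltnS => /IH H; rewrite le_max H.
Qed.

Lemma mx_ex g n w : exists2 k, (k <= n)%N & mx g n w = S g k w.
Proof.
elim: n => [|n [k kn IH]] /=; first by exists 0%N => //; rewrite S0.
case: (leP (mx g n w) (S g n.+1 w)) => H.
  by exists n.+1.
by exists k => //; apply: leqW.
Qed.

Lemma mx_le g n w c : 0 <= c -> (forall k, (k <= n)%N -> S g k w <= c) -> mx g n w <= c.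
Proof.
move=> c0 H; have [k kn ->] := mx_ex g n w; exact: H.
Qed.

Lemma mx_shift g n w : 0 < mx g n w -> mx g n w <= g w + mx g n (theta w).
Proof.
have [k kn ->] := mx_ex g n w.
case: k kn => [|k] kn; first by rewrite S0 ltxx.
move=> _; rewrite SS lerD2l; apply: mx_ge; exact: ltnW.
Qed.

Lemma mx_mono g n w : mx g n w <= mx g n.+1 w.
Proof. by rewrite /= le_max lexx. Qed.

Lemma m_mx g n : measurable_fun setT g -> measurable_fun setT (mx g n).
Proof.
move=> mg; elim: n => [|n IH] /=; first exact: measurable_cst.
exact: measurable_maxr IH (mS _ _ mg).
Qed.

Lemma S_le_a (f : T -> R) a k w : (forall x, 0 <= f x) ->
  S (fun x => a - f x) k w <= k%:R * a.
Proof.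
move=> f0; rewrite /S; apply: (@le_trans _ _ (\sum_(j < k) a)).
  by apply: ler_sum => j _; rewrite lerBlDr lerDl; exact: f0.
by rewrite sumr_const card_ord mulr_natl.
Qed.

Lemma maximal (f : T -> R) (a : R) (n : nat) :
  measurable_fun setT f -> (forall x, 0 <= f x) -> 0 <= a ->
  (\int[P]_x (f x * \1_[set w | 0 < mx (fun w => a - f w) n w] x)%:E <= a%:E)%E.
Proof.
move=> mf f0 a0.
set g := fun w => a - f w.
set M := [set w | 0 < mx g n w].
have mg : measurable_fun setT g by apply: measurable_funB => //; exact: measurable_cst.
have mmx : measurable_fun setT (mx g n) by exact: m_mx.
have mM : measurable M by exact: mset_gt.
have bnd w : mx g n w <= n%:R * a.
  apply: mx_le; first by apply: mulr_ge0.
  move=> k kn; apply: le_trans (S_le_a _ _ _ _ f0) _.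
  by apply: ler_wpM2r => //; rewrite ler_nat.
have key w : ((mx g n w)%:E + (f w * \1_M w)%:E <=
              (a * \1_M w)%:E + (mx g n (theta w))%:E)%E.
  rewrite -!EFinD lee_fin /indic.
  case: (boolP (w \in M)) => wM /=.
    rewrite !mulr1; have := mx_shift g n w; rewrite inE in wM.
    move=> /(_ wM); rewrite /g; lra.
  rewrite !mulr0 add0r addr0.
  have : ~ (0 < mx g n w) by move=> H; move/negP: wM; apply; rewrite inE.
  have := mx_ge0 g n w; have := mx_ge0 g n (theta w).
  move=> h1 h2 h3; have : mx g n w = 0.
    by apply/eqP; rewrite eq_le h2 andbT leNgt; apply/negP.
  by move=> ->.
have mfM : measurable_fun setT (fun x => f x * \1_M x).
  by apply: measurable_funM => //; exact: measurable_indic.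
have fM0 x : 0 <= f x * \1_M x by apply: mulr_ge0 => //; rewrite /indic.
have H : (\int[P]_x ((mx g n x)%:E + (f x * \1_M x)%:E) <=
           \int[P]_x ((a * \1_M x)%:E + (mx g n (theta x))%:E))%E.
  apply: ge0_le_integral => //.
  - by move=> x _; rewrite adde_ge0 // lee_fin ?mx_ge0.
  - apply: emeasurable_funD; apply/measurable_EFinP => //.
  - apply: emeasurable_funD; apply/measurable_EFinP => //.
      apply: measurable_funM => //; exact: measurable_indic.
    exact: measurableT_comp.
rewrite ge0_integralD // in H; first last.
- exact/measurable_EFinP.
- by move=> x _; rewrite lee_fin.
- exact/measurable_EFinP.
- by move=> x _; rewrite lee_fin mx_ge0.
rewrite ge0_integralD // in H; first last.
- apply/measurable_EFinP; exact: measurableT_comp.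
- by move=> x _; rewrite lee_fin mx_ge0.
- apply/measurable_EFinP; apply: measurable_funM => //; exact: measurable_indic.
- by move=> x _; rewrite lee_fin mulr_ge0 // /indic.
rewrite (int_comp (fun x => (mx g n x)%:E)) in H; first last.
- by move=> x; rewrite lee_fin mx_ge0.
- exact/measurable_EFinP.
have E1 : (\int[P]_x (a * \1_M x)%:E = a%:E * P M)%E.
  under eq_integral do rewrite EFinM.
  rewrite ge0_integralZl_EFin // ?integral_indic ?setIT //.
  exact/measurable_EFinP/measurable_indic.
rewrite E1 in H.
have fin : (\int[P]_x (mx g n x)%:E)%E \is a fin_num.
  rewrite ge0_fin_numE; last by apply: integral_ge0 => x _; rewrite lee_fin mx_ge0.
  apply: (@le_lt_trans _ _ (\int[P]_x (cst (n%:R * a)%:E) x)%E).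
    apply: ge0_le_integral => //.
    - by move=> x _; rewrite lee_fin mx_ge0.
    - exact/measurable_EFinP.
    - by move=> x _; rewrite lee_fin.
  rewrite integral_cst //; apply: (@le_lt_trans _ _ ((n%:R*a)%:E * 1)%E); last by rewrite mule1 ltry.
  by apply: lee_wpmul2l; [rewrite lee_fin mulr_ge0|exact: probability_le1].
rewrite addeC leeD2rE // in H.
apply: (le_trans H); rewrite -[X in (_ <= X)%E]mule1.
by apply: lee_wpmul2l; [rewrite lee_fin|apply: probability_le1].
Qed.

Lemma mx_monoN g m n w : (m <= n)%N -> mx g m w <= mx g n w.
Proof.
elim: n => [|n IH]; first by rewrite leqn0 => /eqP ->.
rewrite leq_eqVlt => /orP [/eqP -> //|]; rewrite ltnS => /IH H.
exact: le_trans H (mx_mono _ _ _).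
Qed.

Definition J (g : T -> R) (m : nat) := [set w | forall k, S g k w <= m%:R].

Lemma mJ g m : measurable_fun setT g -> measurable (J g m).
Proof.
move=> mg; have -> : J g m = \bigcap_k [set w | S g k w <= m%:R].
  by apply/seteqP; split => w /= H k; [move=> _; apply: H|apply: H]...
by apply: bigcapT_measurable => k; apply: mset_le; exact: mS.
Qed.

Lemma J_inv g : theta @^-1` (\bigcup_m J g m) = \bigcup_m J g m.
Proof.
apply/seteqP; split => w /=.
- move=> [m _ Hm]; exists (Num.truncn (m%:R + `|g w|)).+1 => // k.
  case: k => [|k]; first by rewrite S0.
  rewrite SS; apply: le_trans _ (ltW (truncnS_gt _)).
  have := Hm k; have := ler_norm (g w); lra.
- move=> [m _ Hm]; exists (Num.truncn (m%:R + `|g w|)).+1 => // k.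
  apply: le_trans _ (ltW (truncnS_gt _)).
  have := Hm k.+1; rewrite SS.
  have := ler_norm (- g w); rewrite normrN; lra.
Qed.

Lemma erg_step (f : T -> R) (lam a : R) :
  ergodic P theta -> measurable_fun setT f -> (forall x, 0 <= f x) ->
  (\int[P]_x (f x)%:E = lam%:E)%E -> 0 < a -> a < lam ->
  P (\bigcup_m J (fun x => a - f x) m) = 1%E.
Proof.
move=> erg mf f0 Ef a0 alam.
set g := fun x => a - f x.
have mg : measurable_fun setT g by apply: measurable_funB => //; exact: measurable_cst.
set U := \bigcup_m J g m.
have mU : measurable U by apply: bigcupT_measurable => m; exact: mJ.
case: (erg U mU (J_inv g)) => // PU0.
exfalso.
set MM := fun n => [set w | 0 < mx g n w].
have mMM n : measurable (MM n) by apply: mset_gt; exact: m_mx.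
set gn := fun n x => (f x * \1_(MM n) x)%:E.
have mgn n : measurable_fun setT (gn n).
  by apply/measurable_EFinP; apply: measurable_funM => //; exact: measurable_indic.
have gn0 n x : (0 <= gn n x)%E by rewrite lee_fin mulr_ge0 // /indic.
have ndgn x : nondecreasing_seq (gn ^~ x).
  move=> m n mn; rewrite lee_fin /indic; case: (boolP (x \in MM m)) => xm.
    have xn : x \in MM n.
      by rewrite inE /MM /=; move: xm; rewrite inE /= => H; apply: lt_le_trans H (@mx_monoN g m n x mn).
    by rewrite xn.
  by rewrite mulr0 mulr_ge0 //; case: (_ \in _).
have cvgn x : cvgn (gn ^~ x) by apply: ereal_nondecreasing_is_cvgn; exact: ndgn.
have pw x : ((f x)%:E <= limn (gn ^~ x) + (f x * \1_U x)%:E)%E.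
  case: (boolP (x \in U)) => xU.
    rewrite /indic xU mulr1 leeDr //; apply: lime_ge => //; exact: nearW.
  rewrite /indic (negbTE xU) mulr0 adde0; apply: lime_ge => //.
  have : ~ J g 0 x by move=> H; move/negP: xU; apply; rewrite inE; exists 0%N.
  move=> /existsNP [k] /negP; rewrite -ltNge => Sk.
  near=> n; have kn : (k <= n)%N by near: n; exists k.
  have xn : x \in MM n.
    by rewrite inE /MM /=; apply: lt_le_trans Sk (@mx_ge g n k x kn).
  by rewrite /gn /indic xn mulr1.
have mlim : measurable_fun setT (fun x => limn (gn ^~ x)).
  apply: emeasurable_fun_cvg mgn _ => x _; exact: cvgn.
have H : (\int[P]_x (f x)%:E <= \int[P]_x (limn (gn ^~ x) + (f x * \1_U x)%:E))%E.
  apply: ge0_le_integral => //.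
  - by move=> x _; rewrite lee_fin.
  - exact/measurable_EFinP.
  - apply: emeasurable_funD => //.
    apply/measurable_EFinP; apply: measurable_funM => //.
rewrite ge0_integralD // in H; first last.
- apply/measurable_EFinP; apply: measurable_funM => //; exact: measurable_indic.
- by move=> x _; rewrite lee_fin mulr_ge0 // /indic.
- by move=> x _; apply: lime_ge => //; exact: nearW.
have E0 : (\int[P]_x (f x * \1_U x)%:E = 0)%E.
  have -> : (fun x => (f x * \1_U x)%:E) = ((EFin \o f) \_ U).
    apply/funext => x; rewrite /patch /indic; case: (x \in U) => /=.
      by rewrite mulr1.
    by rewrite mulr0.
  rewrite -integral_mkcond; apply: null_set_integral => //.
  apply/measurable_EFinP; exact: measurable_funS mf.
rewrite E0 adde0 Ef in H.
have : (\int[P]_x limn (gn ^~ x) <= a%:E)%E.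
  rewrite (@monotone_convergence _ T R P setT measurableT gn) //; try by move=> x _; exact: ndgn.
  apply: lime_le; first by apply: ereal_nondecreasing_is_cvgn => m n mn; apply: ge0_le_integral => // x _; exact: ndgn.
  by apply: nearW => n; exact: (@maximal f a n mf f0 (ltW a0)).
move=> /(le_trans H); rewrite lee_fin; lra.
Unshelve. all: by end_near.
Qed.


Definition good (h : T -> R) := [/\ measurable_fun setT h, forall x, 0 <= h x &
  (\int[P]_x (h x)%:E)%E \is a fin_num].
Definition I (h : T -> R) := fine (\int[P]_x (h x)%:E)%E.

Lemma goodD h1 h2 : good h1 -> good h2 ->
  good (fun x => h1 x + h2 x) /\ I (fun x => h1 x + h2 x) = I h1 + I h2.
Proof.
move=> [m1 p1 f1] [m2 p2 f2].
have E : (\int[P]_x (h1 x + h2 x)%:E = \int[P]_x (h1 x)%:E + \int[P]_x (h2 x)%:E)%E.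
  under eq_integral do rewrite EFinD.
  rewrite ge0_integralD //; try exact/measurable_EFinP.
  - by move=> x _; rewrite lee_fin.
  - by move=> x _; rewrite lee_fin.
split; first split.
- exact: measurable_funD.
- by move=> x; rewrite addr_ge0.
- by rewrite E fin_numD f1 f2.
by rewrite /I E fineD.
Qed.

Lemma goodZ c h : 0 <= c -> good h ->
  good (fun x => c * h x) /\ I (fun x => c * h x) = c * I h.
Proof.
move=> c0 [m1 p1 f1].
have E : (\int[P]_x (c * h x)%:E = c%:E * \int[P]_x (h x)%:E)%E.
  under eq_integral do rewrite EFinM.
  rewrite ge0_integralZl_EFin //; last exact/measurable_EFinP.
  by move=> x _; rewrite lee_fin.
split; first split.
- by apply: measurable_funM => //; exact: measurable_cst.
- by move=> x; rewrite mulr_ge0.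
- by rewrite E fin_numM.
by rewrite /I E fineM.
Qed.

Lemma goodC (c : R) : 0 <= c -> good (fun _ => c) /\ I (fun _ => c) = c.
Proof.
move=> c0.
have E : (\int[P]_x (c%:E) = c%:E)%E.
  have -> : (fun x : T => c%:E) = cst c%:E by [].
  rewrite integral_cst //.
  apply: (@eq_trans _ _ (c%:E * 1)%E); last exact: mule1.
  congr (_ * _)%E; exact: probability_setT.
split; first split.
- exact: measurable_cst.
- by [].
- by rewrite E.
by rewrite /I E.
Qed.

Lemma good_ind A : measurable A -> good (\1_A) /\ I (\1_A) = fine (P A).
Proof.
move=> mA.
have E : (\int[P]_x (\1_A x)%:E = P A)%E by rewrite integral_indic // setIT.
split; first split.
- exact: measurable_indic.
- by move=> x; rewrite /indic.
- by rewrite E fin_num_measure.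
by rewrite /I E.
Qed.

Lemma I_le h1 h2 : good h1 -> good h2 -> (forall x, h1 x <= h2 x) -> I h1 <= I h2.
Proof.
move=> [m1 p1 f1] [m2 p2 f2] H; apply: fine_le => //.
apply: ge0_le_integral => //.
- by move=> x _; rewrite lee_fin.
- exact/measurable_EFinP.
- exact/measurable_EFinP.
- by move=> x _; rewrite lee_fin.
Qed.

Lemma good_sum (F : nat -> T -> R) n : (forall i, good (F i)) ->
  good (fun x => \sum_(i < n) F i x) /\ I (fun x => \sum_(i < n) F i x) = \sum_(i < n) I (F i).
Proof.
move=> gF; elim: n => [|n [g1 I1]].
  have [g0 I0] := @goodC 0 (lexx _).
  have -> : (fun x => \sum_(i < 0) F i x) = (fun _ => 0) by apply/funext => x; rewrite big_ord0.
  by rewrite big_ord0.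
have [g2 I2] := @goodD _ _ g1 (gF n).
split.
  by under eq_fun do rewrite big_ord_recr.
by under eq_fun do rewrite big_ord_recr; rewrite I2 I1 big_ord_recr.
Qed.


Lemma mset_ge (h : T -> R) c : measurable_fun setT h -> measurable [set x | c <= h x].
Proof.
move=> mh; have := mh measurableT `[c, +oo[%classic (measurable_itv _); rewrite setTI.
congr measurable; apply/seteqP; split => x /=; by rewrite in_itv /= andbT.
Qed.

Lemma Sg_eq (f : T -> R) a k w : S (fun x => a - f x) k w = k%:R * a - S f k w.
Proof. by rewrite /S sumrB sumr_const card_ord mulr_natl. Qed.

Lemma main (f : T -> R) (lamS PS : R) :
  ergodic P theta ->
  measurable_fun setT f -> (forall w, 0 <= f w) ->
  ('E_P[f] = lamS%:E)%E -> 0 < lamS -> 0 < PS ->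
  let E := fun w (t : nat) => f (iter t theta w) in
  let B := fun (t : nat) w => battery (E w) PS t in
  (fun n : nat => (n%:R^-1 : R) *
     \sum_(t < n) fine ('E_P[\1_[set w | (PS <= B t w)%R]])%E)
    @ \oo --> (Num.min 1 (lamS / PS) : R).
Proof.
move=> erg mf f0 Ef lam0 PS0 E B.
have Ef' : (\int[P]_x (f x)%:E = lamS%:E)%E by move: Ef; rewrite unlock.
set A := fun t => [set w | PS <= B t w].
have mB t : measurable_fun setT (B t).
  elim: t => [|t IH]; first exact: measurable_cst.
  rewrite /B /=; apply: measurable_funD.
    apply: measurable_funB => //; rewrite /consumption.
    apply: measurable_fun_ifT; [|exact: measurable_cst|exact: measurable_cst].
    by apply: measurable_fun_ler => //; exact: measurable_cst.
  exact: measurableT_comp mf (miter t).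
have mA t : measurable (A t) by exact: mset_ge.
set Nf := fun (n : nat) w => Ncnt (E w) PS n.
have NfE n w : Nf n w = \sum_(t < n) \1_(A t) w.
  apply: eq_bigr => t _; rewrite /indic /A.
  case: (boolP (PS <= battery (E w) PS t)) => H.
    by rewrite mem_set.
  by rewrite memNset //; apply/negP.
have gNI : forall n, good (Nf n) /\ I (Nf n) =
    \sum_(t < n) fine ('E_P[\1_[set w | (PS <= B t w)%R]])%E.
  move=> n; have [g1 I1] := @good_sum (fun t => \1_(A t)) n (fun t => (@good_ind (A t) (mA t)).1).
  have -> : Nf n = fun w => \sum_(t < n) \1_(A t) w by apply/funext => w; exact: NfE.
  split => //; rewrite I1; apply: eq_bigr => t _; by rewrite unlock.
have gf j : good (fun w => f (iter j theta w)) /\ I (fun w => f (iter j theta w)) = lamS.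
  have E1 : (\int[P]_w (f (iter j theta w))%:E = lamS%:E)%E.
    rewrite (int_iter (fun x => (f x)%:E)) //; try exact/measurable_EFinP.
    all: try by move=> x; rewrite lee_fin.
  split; first split.
  - exact: measurableT_comp mf (miter j).
  - by move=> w.
  - by rewrite E1.
  by rewrite /I E1.
have gS n : good (S f n) /\ I (S f n) = n%:R * lamS.
  have [g1 I1] := @good_sum (fun j w => f (iter j theta w)) n (fun j => (gf j).1).
  split; first exact: g1.
  have -> : S f n = fun w => \sum_(j < n) f (iter j theta w) by [].
  rewrite I1; under eq_bigr do rewrite (gf _).2.
  by rewrite sumr_const card_ord mulr_natl.
have U1 n : I (Nf n) <= n%:R.
  have [gc Ic] := @goodC n%:R (ler0n _ _).
  rewrite -Ic; apply: I_le => //; first exact: (gNI n).1.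
  move=> w; exact: Ncnt_le.
have U2 n : PS * I (Nf n) <= n%:R * lamS.
  have [gz Iz] := @goodZ PS (Nf n) (ltW PS0) (gNI n).1.
  rewrite -Iz -(gS n).2; apply: I_le => //; first exact: (gS n).1.
  move=> w; have := @batt_ge0 _ (E w) PS n (fun t => f0 _).
  by rewrite batt_eq /Nf /S /E; lra.
apply/cvgrPdist_le => eps eps0.
set L := Num.min 1 (lamS / PS).
set q := lamS / PS.
have hq : PS * q = lamS by rewrite /q mulrC divfK // gt_eqF.
have pe : 0 < PS * eps by exact: mulr_gt0.
set eta := Num.min (lamS / 2) (PS * eps / 3).
have eta0 : 0 < eta by rewrite lt_min; apply/andP; split; lra.
have eta1 : eta <= lamS / 2 by rewrite ge_min lexx.
have eta2 : eta <= PS * eps / 3 by rewrite ge_min lexx orbT.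
set a := lamS - eta.
have a0 : 0 < a by rewrite /a; lra.
have alam : a < lamS by rewrite /a; lra.
have PU := @erg_step f lamS a erg mf f0 Ef' a0 alam.
set g := fun x => a - f x.
have mg : measurable_fun setT g.
  by apply: measurable_funB => //; exact: measurable_cst.
have ndJ : nondecreasing_seq (J g).
  move=> m n mn; apply/subsetPset => w Jm k; apply: le_trans (Jm k) _.
  by rewrite ler_nat.
have cvJ := @nondecreasing_cvg_mu _ _ _ P (J g) (fun m => mJ g m mg)
   (bigcupT_measurable _ (fun m => mJ g m mg)) ndJ.
have cvJ1 : (P \o J g) @ \oo --> P (\bigcup_n J g n) := cvJ.
rewrite PU in cvJ1.
have cvJ' : (fine \o (P \o J g)) @ \oo --> (1 : R) by apply: fine_cvg.
have e3 : 0 < eps / 3 by lra.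
have [M _ HM] := (cvgrPdist_lt _ _).1 cvJ' (eps / 3) e3.
have HM' := HM M (leqnn M); rewrite /= in HM'.
set Jm := J g M.
have mJm : measurable Jm by exact: mJ.
set del := fine (P (~` Jm)).
have hdel : del <= eps / 3.
  rewrite /del (probability_setC P mJm) fineB ?fin_num_measure //.
  by move: HM'; move/ltW/ler_normlW.
have [gJc IJc] := @good_ind (~` Jm) (measurableC mJm).
set r := Num.max 0 (PS - a).
have r0 : 0 <= r by rewrite le_max lexx.
have r1 : PS - a <= r by rewrite le_max lexx orbT.
have rPS : r <= PS by rewrite ge_max; apply/andP; split; lra.
have hr : PS * L - eta <= PS - r.
  case: (leP lamS PS) => hl.
    have q1 : q <= 1 by rewrite /q ler_pdivrMr // mul1r.
    have -> : L = q by rewrite /L min_r.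
    have -> : r = PS - a by rewrite /r max_r //; rewrite /a; lra.
    rewrite /a; lra.
  have q1 : 1 <= q by rewrite /q ler_pdivlMr // mul1r ltW.
  have -> : L = 1 by rewrite /L min_l.
  have : r <= eta by rewrite /r ge_max; apply/andP; split; rewrite /a; lra.
  lra.
have pw n w : n%:R * (PS - r) <= PS * Nf n w + PS * n%:R * \1_(~` Jm) w + (2 * PS + M%:R).
  rewrite /indic; case: (boolP (w \in ~` Jm)) => Hw /=.
    rewrite mulr1; have := mulr_ge0 (ler0n _ n) r0.
    have := mulr_ge0 (ltW PS0) (@Ncnt_ge0 _ (E w) PS n); have := ler0n R M; rewrite /Nf; lra.
  have HJ : Jm w.
    by apply: contrapT => HJ; move/negP: Hw; apply; apply: mem_set.
  have := @batt_idle _ (E w) PS n (n%:R * r + M%:R) (ltW PS0).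
  have H : forall k, (k <= n)%N -> k%:R * PS - \sum_(t < k) E w t <= n%:R * r + M%:R.
    move=> k kn; have := HJ k; rewrite /g Sg_eq.
    have h1 : k%:R * (PS - a) <= k%:R * r by apply: ler_wpM2l.
    have h2 : k%:R * r <= n%:R * r by apply: ler_wpM2r => //; rewrite ler_nat.
    rewrite /S /E; lra.
  move=> /(_ H); rewrite mulr0 /Nf; lra.
have LB n : n%:R * (PS - r) <= PS * I (Nf n) + PS * n%:R * del + (2 * PS + M%:R).
  have c0 : 0 <= 2 * PS + M%:R by have := ler0n R M; lra.
  have [ga Ia] := @goodZ PS (Nf n) (ltW PS0) (gNI n).1.
  have [gb Ib] := @goodZ (PS * n%:R) (\1_(~` Jm)) (mulr_ge0 (ltW PS0) (ler0n _ _)) gJc.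
  have [gab Iab] := @goodD _ _ ga gb.
  have [gc Ic] := @goodC _ c0.
  have [gabc Iabc] := @goodD _ _ gab gc.
  have nr : 0 <= PS - r by lra.
  have [gl Il] := @goodC (n%:R * (PS - r)) (mulr_ge0 (ler0n _ _) nr).
  rewrite -Il /del -IJc -Ib -Ia -Ic -Iab -Iabc.
  by apply: I_le => // w; exact: pw.
set c := 2 * PS + M%:R.
have pe3 : 0 < PS * eps / 3 by lra.
near=> n.
have nN : ((Num.truncn (c / (PS * eps / 3))).+1 <= n)%N.
  by near: n; exists (Num.truncn (c / (PS * eps / 3))).+1.
have cN : c < n%:R * (PS * eps / 3).
  have h1 := truncnS_gt (c / (PS * eps / 3)).
  have h2 : ((Num.truncn (c / (PS * eps / 3))).+1)%:R <= n%:R :> R by rewrite ler_nat.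
  rewrite -ltr_pdivrMr //; lra.
have n0 : 0 < n%:R :> R by rewrite ltr0n; exact: leq_trans _ nN.
rewrite -(gNI n).2.
have hU1 := U1 n; have hU2 := U2 n; have hLB := LB n.
set s := I (Nf n) in hU1 hU2 hLB *.
set y := n%:R^-1 * s.
have sy : s = n%:R * y by rewrite /y mulrA mulfV ?mul1r // gt_eqF.
rewrite sy in hU1 hU2 hLB.
clearbody y s.
have y1 : y <= 1 by nra.
have y2 : PS * y <= lamS by nra.
have y3 : PS - r <= PS * y + PS * del + PS * eps / 3.
  have y3' : n%:R * (PS - r - PS * y - PS * del - PS * eps / 3) < 0 by rewrite -/c in hLB; lra.
  rewrite pmulr_rlt0 // in y3'; lra.
have hd : PS * del <= PS * (eps / 3) by apply: ler_wpM2l => //; exact: ltW.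
have hL : PS * L <= PS * y + PS * eps by lra.
have yL : y <= L.
  rewrite /L le_min; apply/andP; split => //.
  by rewrite ler_pdivlMr // mulrC.
have Ly : L - eps <= y.
  have Ly' : PS * (L - eps - y) <= 0 by lra.
  rewrite pmulr_rle0 // in Ly'; lra.
rewrite ler_norml; apply/andP; split; lra.
Unshelve. all: by end_near.
Qed.

End Erg.

(* The harvesting process is E^t(w) = f (theta^t w) with theta measure-preserving
   and ergodic: the general stationary ergodic sequence (in law). *)
Theorem lemma1 (d : measure_display) (T : measurableType d) (R : realType)
  (P : probability T R) (theta : T -> T) (f : T -> R) (lamS PS : R) :
  measure_preserving P theta -> ergodic P theta ->
  measurable_fun setT f -> (forall w, 0 <= f w) ->
  ('E_P[f] = lamS%:E)%E -> 0 < lamS -> 0 < PS ->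
  let E := fun w (t : nat) => f (iter t theta w) in
  let B := fun (t : nat) w => battery (E w) PS t in
  (fun n : nat => (n%:R^-1 : R) *
     \sum_(t < n) fine ('E_P[\1_[set w | (PS <= B t w)%R]])%E)
    @ \oo --> (Num.min 1 (lamS / PS) : R).
Proof.
move=> [mt pr] erg mf f0 Ef l0 p0.
exact: (@main d T R P theta mt pr f lamS PS erg mf f0 Ef l0 p0).
Qed.
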